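(* Let $D_S>0$, $c_1>0$ and $c_2\ge 0$ be the constants described in the context, and consider, for $t\ge 0$, $$h(t) = e^{tD_S/2} - 1 - \frac{tD_S - c_2}{c_1}.$$ Then there exist $0\le \underline{t} < \overline{t}$ such that $h(t)\le 0$ for all $t\in[\underline{t},\overline{t}]$, where $h(\underline{t}) = h(\overline{t}) = 0$, if and only if $$c_1 < 2 \quad\text{and}\quad c_2 < c_1 - 2\left(1-\log(2/c_1)\right).$$
   Context: Setting: $\mathcal{X}\subset\mathbb{R}^d$ is compact; $f:\mathbb{R}^d\to\mathbb{R}^d$, $g^c:\mathbb{R}^d\to\mathbb{R}^{d\times m}$, $g^{uc}:\mathbb{R}^d\to\mathbb{R}^{d\times p}$, $g=[g^c\ g^{uc}]$, with $f$ and $g$ Lipschitz on $\mathcal{X}$ in the $\infty$-norm with constants $D_f$, $D_g$; $D_S\coloneqq D_f+D_g$. Given $x_0\in\mathcal{X}$ and a target $x_{tg}\in\mathbb{R}^d$, let $g^c_0\coloneqq g^c(x_0)$ (assumed to have full row rank $d$), $g^{uc}_0\coloneqq g^{uc}(x_0)$, and $(g^c_0)^\dagger$ its Moore–Penrose pseudoinverse. All matrix norms are induced $\infty$-norms. Define $c \coloneqq \|f(x_0)\|_\infty + \|g^{uc}_0\|_\infty + D_S\|x_{tg}-x_0\|_\infty$, $c_1 \coloneqq 4c\|(g^c_0)^\dagger\|_\infty$, and $c_2 \coloneqq 4D_S\|(g^c_0)^\dagger\|_\infty\|g^{uc}_0\|_\infty\|\alpha_2\|_\infty$ with $\alpha_2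 = \frac{1}{4}\mathbf{1}_p$ ($\mathbf{1}_p$ the all-ones vector in $\mathbb{R}^p$). *)

(* Defs.v *)
From Stdlib Require Import Reals Lra.
Open Scope R_scope.

Definition h (DS c1 c2 t : R) : R :=
  exp (t * DS / 2) - 1 - (t * DS - c2) / c1.

(* Main.v *)
Require Import Defs.
From Stdlib Require Import Reals Lra Psatz.
Open Scope R_scope.

Lemma tang (a s : R) : exp a * (1 + s - a) <= exp s.
Proof.
  replace s with (a + (s - a)) at 2 by ring. rewrite exp_plus.
  pose proof (exp_ineq1_le (s - a)). pose proof (exp_pos a).
  replace (1 + s - a) with (1 + (s - a)) by ring. nra.
Qed.

Lemma tang_s (a s : R) : a <> s -> exp a * (1 + s - a) < exp s.
Proof.
  intro H. replace s with (a + (s - a)) at 2 by ring. rewrite exp_plus.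
  assert (s - a <> 0) by lra.
  pose proof (exp_ineq1 (s - a) H0). pose proof (exp_pos a).
  replace (1 + s - a) with (1 + (s - a)) by ring. nra.
Qed.

Lemma convex (a t b : R) : a <= t <= b ->
  (b - a) * exp t <= (b - t) * exp a + (t - a) * exp b.
Proof.
  intros [H1 H2]. pose proof (tang t a). pose proof (tang t b).
  assert (0 <= b - t) by lra. assert (0 <= t - a) by lra.
  assert ((b - t) * (exp t * (1 + a - t)) <= (b - t) * exp a) by (apply Rmult_le_compat_l; lra).
  assert ((t - a) * (exp t * (1 + b - t)) <= (t - a) * exp b) by (apply Rmult_le_compat_l; lra).
  nra.
Qed.

Lemma hE DS c1 c2 t : h DS c1 c2 t = exp (t * DS / 2) - 1 - (2 * (t * DS / 2) - c2) / c1.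
Proof. unfold h. replace (2 * (t * DS / 2)) with (t * DS) by field. reflexivity. Qed.

Theorem lemma2 (DS c1 c2 : R) (hDS : 0 < DS) (hc1 : 0 < c1) (hc2 : 0 <= c2) :
  (exists tl tu : R,
      0 <= tl /\ tl < tu /\
      h DS c1 c2 tl = 0 /\ h DS c1 c2 tu = 0 /\
      (forall t, tl <= t <= tu -> h DS c1 c2 t <= 0))
  <->
  (c1 < 2 /\ c2 < c1 - 2 * (1 - ln (2 / c1))).
Proof.
  set (G := fun s => exp s - 1 - (2 * s - c2) / c1).
  assert (GE : forall s, G s * c1 = c1 * exp s - c1 - 2 * s + c2).
  { intro s. unfold G. field. lra. }
  assert (hG : forall t, h DS c1 c2 t = G (t * DS / 2)).
  { intro t. rewrite hE. reflexivity. }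
  split.
  - intros (tl & tu & H0 & H1 & Ha & Hb & Hbt).
    set (a := tl * DS / 2) in *. set (b := tu * DS / 2) in *.
    assert (Ha0 : 0 <= a) by (unfold a; nra).
    assert (Hab : a < b) by (unfold a, b; nra).
    set (m := (a + b) / 2).
    assert (Hm : G m <= 0).
    { replace m with (((tl + tu) / 2) * DS / 2) by (unfold m, a, b; field).
      rewrite <- hG. apply Hbt. lra. }
    rewrite hG in Ha, Hb. fold a in Ha. fold b in Hb.
    pose proof (tang_s m a ltac:(unfold m; lra)).
    pose proof (tang_s m b ltac:(unfold m; lra)).
    assert (Hsum : 2 * exp m < exp a + exp b) by (unfold m in *; nra).
    assert (Gm : G m * c1 < 0).
    { rewrite GE. pose proof (GE a) as Xa. pose proof (GE b) as Xb. rewrite Ha in Xa.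
      rewrite Hb in Xb. unfold m in *. nra. }
    rewrite GE in Gm.
    assert (Hm0 : 0 <= m) by (unfold m; lra).
    split.
    + destruct (Rlt_or_le c1 2) as [?|Hc]; [assumption|].
      pose proof (exp_ineq1_le m). exfalso. nra.
    + assert (Hp : 0 < 2 / c1) by (apply Rdiv_lt_0_compat; lra).
      pose proof (tang (ln (2 / c1)) m) as T2. rewrite exp_ln in T2 by lra.
      assert (c1 * (2 / c1 * (1 + m - ln (2 / c1))) <= c1 * exp m)
        as T3 by (apply Rmult_le_compat_l; lra).
      replace (c1 * (2 / c1 * (1 + m - ln (2 / c1)))) with (2 * (1 + m - ln (2 / c1))) in T3
        by (field; lra).
      lra.
  - intros [Hc1 Hc2].
    set (s := ln (2 / c1)).
    assert (Hs : 0 < s).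
    { unfold s. rewrite <- ln_1. apply ln_increasing; [lra|].
      apply (Rmult_lt_reg_r c1); [lra|]. unfold Rdiv. rewrite Rmult_assoc, Rinv_l; lra. }
    assert (Es : exp s = 2 / c1) by (unfold s; apply exp_ln; apply Rdiv_lt_0_compat; lra).
    assert (Gs : G s < 0).
    { pose proof (GE s). rewrite Es in H.
      replace (c1 * (2 / c1)) with 2 in H by (field; lra).
      fold s in Hc2. nra. }
    assert (G0 : 0 <= G 0).
    { pose proof (GE 0). rewrite exp_0 in H. nra. }
    set (S := s + 8 / c1).
    assert (GS : 0 < G S).
    { pose proof (GE S) as X0.
      assert (X1 : exp S = exp (S/2) * exp (S/2)) by (rewrite <- exp_plus; f_equal; field).
      pose proof (exp_ineq1_le (S/2)) as X2.
      assert (X3 : 0 < 8 / c1) by (apply Rdiv_lt_0_compat; lra).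
      assert (X4 : c1 * (8 / c1) = 8) by (field; lra).
      assert (XS : 8 / c1 <= S) by (unfold S; lra).
      assert (X5 : (1 + S/2) * (1 + S/2) <= exp (S/2) * exp (S/2))
        by (apply Rmult_le_compat; lra).
      assert (X6 : exp S >= 1 + S + S * S / 4) by nra.
      assert (X7 : c1 * S * (8 / c1) <= c1 * S * S)
        by (apply Rmult_le_compat_l; nra).
      assert (X8 : c1 * S * (8 / c1) = 8 * S) by (field; lra).
      assert (0 < G S * c1) by (rewrite X0; nra).
      nra. }
    assert (Gc : continuity G) by (unfold G; reg).
    destruct (IVT_cor G 0 s Gc ltac:(lra) ltac:(nra)) as [sl [Hsl Gsl]].
    destruct (IVT_cor G s S Gc ltac:(unfold S; assert (0 < 8/c1) by (apply Rdiv_lt_0_compat; lra); lra) ltac:(nra)) as [su [Hsu Gsu]].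
    assert (sl <> s) by (intro E; rewrite E in Gsl; lra).
    assert (su <> s) by (intro E; rewrite E in Gsu; lra).
    exists (2 * sl / DS), (2 * su / DS).
    assert (E1 : forall x, 2 * x / DS * DS / 2 = x) by (intro; field; lra).
    split; [| split; [| split; [| split]]].
    + apply Rmult_le_pos; [lra | left; apply Rinv_0_lt_compat; lra].
    + unfold Rdiv. apply Rmult_lt_compat_r; [apply Rinv_0_lt_compat; lra | lra].
    + rewrite hG, E1. exact Gsl.
    + rewrite hG, E1. exact Gsu.
    + intros t Ht. rewrite hG. set (u := t * DS / 2).
      assert (Hu : sl <= u <= su).
      { unfold u. split.
        - replace sl with (2 * sl / DS * DS / 2) by apply E1. nra.
        - replace su with (2 * su / DS * DS / 2) by apply E1. nra. }
      pose proof (convex sl u su Hu).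
      pose proof (GE sl). pose proof (GE su). pose proof (GE u).
      rewrite Gsl in H2. rewrite Gsu in H3.
      assert (Hlt : sl < su) by lra.
      assert ((su - sl) * (G u * c1) <= 0) by (rewrite H4; nra).
      assert (G u * c1 <= 0) by nra.
      nra.
Qed.
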